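(* Let $k$ be an odd positive integer. Then $$\sum_{n=1}^{k-1}\frac{\sin^2(\pi n/k)}{\sin^4(2\pi n/k)}=\frac{1}{48}\left(k^4+6k^2-7\right).$$ *)

(* Defs.v *)
From Stdlib Require Export Reals.

(* Main.v *)
Require Import Defs.
Set Warnings "-notation-overridden,-ambiguous-paths".
From Stdlib Require Import Reals.
From HB Require Import structures.
From mathcomp Require Import all_boot all_order all_algebra.
From mathcomp Require Import Rstruct.
From mathcomp Require Import ring lra zify.
Import Order.TTheory GRing.Theory Num.Theory.
Section Poly.
Local Open Scope ring_scope.
Variable F : fieldType.

Lemma coefXsubCM (a : F) (p : {poly F}) i :
  (('X - a%:P) * p)`_i = (if i is j.+1 then p`_j else 0) - a * p`_i.
Proof. by rewrite mulrBl coefB coefXM coefCM; case: i. Qed.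

Definition qq (rs : seq F) : {poly F} := \prod_(r <- rs) ('X - r%:P).

Lemma qq_top rs : (qq rs)`_(size rs) = 1.
Proof.
have sz : size (qq rs) = (size rs).+1 by rewrite /qq size_prod_XsubC.
have m : qq rs \is monic by rewrite /qq; apply: monic_prod_XsubC.
move: m; rewrite qualifE /= /lead_coef sz /= => /eqP. done.
Qed.

Lemma qq_e1 a rs : (qq (a :: rs))`_(size rs) = - (a + \sum_(r <- rs) r).
Proof.
have := @coefPn_prod_XsubC _ (a :: rs) isT.
rewrite /qq /= => ->. by rewrite big_cons.
Qed.

Lemma qq_e2 a b rs : (qq (a :: b :: rs))`_(size rs) *+ 2 =
  (a + (b + \sum_(r <- rs) r)) ^+ 2 - (a ^+ 2 + (b ^+ 2 + \sum_(r <- rs) r ^+ 2)).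
Proof.
elim: rs a b => [|c rs IH] a b.
  rewrite /qq !big_cons !big_nil mulr1 coefXsubCM /=.
  rewrite coefB coefX coefC /=. ring.
rewrite /qq big_cons -/(qq _) coefXsubCM /=.
have h2 := qq_e1 b (c :: rs). rewrite /= in h2.
rewrite mulrnBl -mulrnAr IH h2 !big_cons. ring.
Qed.

Lemma qq_low rs : all (fun r => r != 0) rs ->
  (qq rs)`_1 = - (qq rs)`_0 * \sum_(r <- rs) r^-1.
Proof.
elim: rs => [|a rs IH] /=.
  by rewrite /qq !big_nil coefC /= mulr0.
case/andP => a0 /IH {}IH.
rewrite /qq big_cons -/(qq _) !coefXsubCM IH big_cons.
field. done.
Qed.
End Poly.
Arguments qq {F}.
Arguments qq_top {F}.
Arguments qq_e1 {F}.
Arguments qq_e2 {F}.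
Arguments qq_low {F}.
Section AB.
Local Open Scope ring_scope.
Variable F : comNzRingType.
Fixpoint AB (k : nat) : {poly F} * {poly F} :=
  match k with 0 => (1, 0) | k'.+1 => let (A, B) := AB k' in (A - 'X * B, B + A) end.

Lemma AB_coef k j : (AB k).1`_j = (-1) ^+ j * ('C(k, j.*2))%:R /\
   (AB k).2`_j = (-1) ^+ j * ('C(k, j.*2.+1))%:R.
Proof.
elim: k j => [|k IH] j.
  rewrite /= coefC coef0; case: j => [|j] /=.
    by split; rewrite /= ?expr0 ?mul1r ?mulr0.
  by split; rewrite bin0n mulr0.
rewrite /=; case: (AB k) (IH) => A B /= {}IH.
rewrite coefB coefXM coefD.
have [-> ->] := IH j.
split; last first.
  by rewrite binS natrD mulrDr addrC.
case: j => [|j] /=.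
  by rewrite !bin0 subr0.
have [_ ->] := IH j.
rewrite doubleS binS natrD exprS. ring.
Qed.
End AB.

Section Trig.
Local Open Scope ring_scope.
Lemma AB_trig (k : nat) (x : R) : cos x != 0 ->
  let t := (sin x / cos x) ^+ 2 in
  cos (Rmult (INR k) x) = cos x ^+ k * (AB R k).1.[t] /\
  sin (Rmult (INR k) x) = cos x ^+ k * (sin x / cos x) * (AB R k).2.[t].
Proof.
move=> c0 t.
elim: k => [|k IH].
  rewrite Rmult_0_l cos_0 sin_0 /= !hornerE. by split.
have -> : Rmult (INR k.+1) x = Rplus (Rmult (INR k) x) x.
  by rewrite S_INR Rmult_plus_distr_r Rmult_1_l.
rewrite /=; case: (AB R k) IH => A B /= [IH1 IH2].
have E1 : forall c s a b : R, c != 0 -> (c^+k*a)*c - (c^+k*(s/c)*b)*s = c^+k.+1*(a - (s/c)^+2*b).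
  by move=> c s a b cn; rewrite exprS; field.
have E2 : forall c s a b : R, c != 0 -> (c^+k*(s/c)*b)*c + (c^+k*a)*s = c^+k.+1*(s/c)*(b + a).
  by move=> c s a b cn; rewrite exprS; field.
rewrite RplusE sinD cosD IH1 IH2 hornerD hornerN hornerM hornerX hornerD /t.
split; [exact: E1 | exact: E2].
Qed.
End Trig.
Section Trig2.
Local Open Scope ring_scope.

Lemma R2 : IZR 2 = 2%:R :> R. Proof. by rewrite IZRposE INRE. Qed.

Lemma PIgt0 : 0 < PI. Proof. by apply/RltP; exact: PI_RGT_0. Qed.

Lemma cosP x : 0 < x -> x < PI / 2 -> 0 < cos x.
Proof.
move=> h1 h2; have := PIgt0 => hp.
apply/RltP; apply: cos_gt_0; apply/RltP; rewrite ?RoppE ?RdivE R2 //; lra.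
Qed.
Global Arguments cosP {x}.

Lemma sinP x : 0 < x -> x < PI -> 0 < sin x.
Proof. by move=> h1 h2; apply/RltP; apply: sin_gt_0; apply/RltP. Qed.
Global Arguments sinP {x}.

Lemma sin_mono x y : 0 < x -> x < y -> y < PI / 2 -> sin x < sin y.
Proof.
move=> h1 h2 h3; have := PIgt0 => hp.
apply/RltP; apply: sin_increasing_1;
  first [apply/RleP | apply/RltP]; rewrite ?RoppE ?RdivE ?R2; lra.
Qed.
Global Arguments sin_mono {x y}.

Lemma cos_mono x y : 0 < x -> x < y -> y < PI / 2 -> cos y < cos x.
Proof.
move=> h1 h2 h3; have := PIgt0 => hp.
apply/RltP; apply: cos_decreasing_1;
  first [apply/RleP | apply/RltP]; rewrite ?RoppE ?RdivE ?R2 ?R0E; lra.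
Qed.
Global Arguments cos_mono {x y}.

Definition xx (K n : nat) : R := Rdiv (Rmult PI (INR n)) (INR K).
Definition TT (K n : nat) : R := (sin (xx K n) / cos (xx K n)) ^+ 2.

Lemma xxE K n : xx K n = PI * n%:R / K%:R.
Proof. by rewrite /xx RdivE RmultE !INRE. Qed.

Lemma xx_bounds K n : (0 < n)%N -> (n.*2 < K)%N -> 0 < xx K n /\ xx K n < PI / 2.
Proof.
move=> n0 nK; have := PIgt0 => hp; rewrite xxE.
have K0 : (0 : R) < K%:R by rewrite ltr0n; apply: leq_ltn_trans nK.
have n0' : (0 : R) < n%:R by rewrite ltr0n.
have h : (n%:R * 2 < K%:R :> R) by rewrite -natrM ltr_nat muln2.
split; first by apply: divr_gt0 => //; apply: mulr_gt0.
rewrite ltr_pdivrMr //. nra.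
Qed.

Lemma xx_mono K n1 n2 : (0 < K)%N -> (n1 < n2)%N -> xx K n1 < xx K n2.
Proof.
move=> K0 h; have := PIgt0 => hp; rewrite !xxE.
have K0' : (0 : R) < K%:R by rewrite ltr0n.
rewrite ltr_pM2r ?invr_gt0 // ltr_pM2l // ltr_nat //.
Qed.

Lemma TT_pos K n : (0 < n)%N -> (n.*2 < K)%N -> 0 < TT K n.
Proof.
move=> n0 nK; have [h1 h2] := xx_bounds _ _ n0 nK.
have hs := sinP h1 (lt_trans h2 _).
have hc := cosP h1 h2.
rewrite /TT exprn_gt0 // divr_gt0 //; apply: hs; have := PIgt0; lra.
Qed.

Lemma TT_mono K n1 n2 : (0 < n1)%N -> (n1 < n2)%N -> (n2.*2 < K)%N -> TT K n1 < TT K n2.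
Proof.
move=> n0 h12 h2K.
have h1K : (n1.*2 < K)%N by apply: leq_ltn_trans h2K; rewrite leq_double ltnW.
have [a1 b1] := xx_bounds _ _ n0 h1K.
have [a2 b2] := xx_bounds _ _ (ltn_trans n0 h12) h2K.
have hx := xx_mono _ _ _ (leq_ltn_trans (leq0n _) h2K) h12.
have hs := sin_mono a1 hx b2.
have hc := cos_mono a1 hx b2.
have hp := PIgt0.
have hpi : PI / 2 < PI by lra.
have s1 := sinP a1 (lt_trans b1 hpi).
have c1 := cosP a1 b1. have c2 := cosP a2 b2.
rewrite /TT.
set S1 := sin (xx K n1) in hs s1 *. set S2 := sin (xx K n2) in hs *.
set C1 := cos (xx K n1) in hc c1 *. set C2 := cos (xx K n2) in hc c2 *.
have q1 : 0 < S1 / C1 by apply: divr_gt0.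
have q12 : S1 / C1 < S2 / C2.
  rewrite ltr_pdivlMr // mulrAC ltr_pdivrMr //. nra.
nra.
Qed.

Lemma TT_root K n : (0 < n)%N -> (n.*2 < K)%N -> (AB R K).2.[TT K n] = 0.
Proof.
move=> n0 nK; have [h1 h2] := xx_bounds _ _ n0 nK.
have hpi : PI / 2 < PI by have := PIgt0; lra.
have hs := sinP h1 (lt_trans h2 hpi).
have hc := cosP h1 h2.
have c0 : cos (xx K n) != 0 by rewrite gt_eqF.
have := (AB_trig K (xx K n) c0).2.
have -> : Rmult (INR K) (xx K n) = Rmult (IZR (Z.of_nat n)) PI.
  rewrite -INR_IZR_INZ xxE !RmultE !INRE. field.
  by rewrite pnatr_eq0 -lt0n; apply: leq_ltn_trans nK.
rewrite sin_eq_0_1; last by exists (Z.of_nat n).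
move/esym/eqP; rewrite !mulf_eq0 expf_eq0 (negbTE c0) andbF /= invr_eq0 (negbTE c0) orbF.
by rewrite gt_eqF //= => /eqP.
Qed.
End Trig2.
Section Sums.
Local Open Scope ring_scope.
Variable p : nat.
Let K := p.*2.+3.
Let B := (AB R K).2.
Let rs := [seq TT K i.+1 | i <- iota 0 p.+1].

Lemma Bc j : B`_j = (-1) ^+ j * ('C(K, j.*2.+1))%:R.
Proof. exact: (AB_coef R K j).2. Qed.

Lemma B_size : size B = p.+2.
Proof.
have -> : B = \poly_(j < p.+2) ((-1) ^+ j * ('C(K, j.*2.+1))%:R :> R).
  apply/polyP => j; rewrite coef_poly Bc; case: ltnP => // hj.
  rewrite bin_small ?mulr0 // /K; lia.
apply: size_poly_eq; rewrite /= /K doubleS binn; apply: mulf_neq0; [by rewrite signr_eq0 | exact: oner_neq0].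
Qed.

Lemma rs_size : size rs = p.+1.
Proof. by rewrite /rs size_map size_iota. Qed.

Lemma rs_mem r : r \in rs -> exists2 i, (i < p.+1)%N & r = TT K i.+1.
Proof. by case/mapP => i; rewrite mem_iota add0n => /andP[_ hi] ->; exists i. Qed.

Lemma rs_pos r : r \in rs -> 0 < r.
Proof.
case/rs_mem => i hi ->; apply: TT_pos => //.
rewrite /K; lia.
Qed.

Lemma B_fact : B = (-1) ^+ p.+1 *: qq rs.
Proof.
have ->: (-1) ^+ p.+1 = lead_coef B :> R.
  by rewrite /lead_coef B_size /= Bc /K doubleS binn mulr1n mulr1.
apply: all_roots_prod_XsubC.
- by rewrite B_size rs_size.
- apply/allP => r /rs_mem [i hi ->]; rewrite /root /B TT_root //.
  rewrite /K; lia.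
- rewrite uniq_rootsE /rs map_inj_in_uniq ?iota_uniq //.
  move=> i j; rewrite !mem_iota !add0n => /andP[_ hi] /andP[_ hj] e.
  have hiK : ((j.+1).*2 < K)%N by rewrite /K; lia.
  have hjK : ((i.+1).*2 < K)%N by rewrite /K; lia.
  case: (ltngtP i j) => // h.
    by have := TT_mono _ _ _ (ltn0Sn i) (h : (i.+1 < j.+1)%N) hiK; rewrite e ltxx.
  by have := TT_mono _ _ _ (ltn0Sn j) (h : (j.+1 < i.+1)%N) hjK; rewrite e ltxx.
Qed.

Lemma Bq i : B`_i = (-1) ^+ p.+1 * (qq rs)`_i.
Proof. by rewrite {1}B_fact coefZ. Qed.

Lemma S1E : \sum_(r <- rs) r = ('C(K, p.*2.+1))%:R.
Proof.
have h := @coefPn_prod_XsubC _ rs.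
rewrite rs_size /= in h. have {}h := h isT.
have := Bq p; rewrite Bc -/(qq rs) in h *; rewrite h exprS mulN1r mulNr mulrN opprK.
by move/(mulfI (negbT (signr_eq0 _ _))).
Qed.

Lemma S2E : \sum_(r <- rs) r ^+ 2 = (\sum_(r <- rs) r) ^+ 2 - 2 * ('C(K, 4))%:R.
Proof.
have [p0|pq] := posnP p.
  rewrite /rs /K p0 /= !big_cons !big_nil !addr0 bin_small // mulr0 subr0 //.
have [q pE] : exists q, p = q.+1 by exists p.-1; rewrite prednK.
have rsE : rs = TT K 1 :: TT K 2 :: [seq TT K i.+1 | i <- iota 2 q].
  by rewrite /rs pE.
have h := Bq q.
have e := qq_e2 (TT K 1) (TT K 2) [seq TT K i.+1 | i <- iota 2 q].
rewrite -rsE size_map size_iota in e.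
rewrite Bc pE !exprS !mulN1r opprK in h.
move/(mulfI (negbT (signr_eq0 _ _))): h => h.
rewrite -h in e.
have c4 : 'C(K, q.*2.+1) = 'C(K, 4).
  have -> : (q.*2.+1 = K - 4)%N by rewrite /K pE; lia.
  by rewrite bin_sub // /K pE; lia.
rewrite c4 in e.
rewrite rsE !big_cons.
move: e; rewrite -mulr_natr => e. lra.
Qed.

Lemma SinvE : \sum_(r <- rs) r^-1 = ('C(K, 3))%:R / K%:R.
Proof.
have h0 := Bq 0. have h1 := Bq 1.
have hnz : all (fun r => r != 0) rs by apply/allP => r /rs_pos /gt_eqF ->.
have hl := qq_low rs hnz.
rewrite hl in h1.
rewrite !Bc /= bin1 expr0 mul1r in h0.
rewrite !Bc /= expr1 in h1.
have K0 : (K%:R : R) != 0 by rewrite pnatr_eq0.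
move: h0 h1.
set S := \sum_(r <- rs) r^-1. set Q := (qq rs)`_0. set L := (-1) ^+ p.+1 : R.
set C3 := ('C(K, 3))%:R : R. set KK := (K%:R : R) in K0 *.
move=> h0 h1.
have e1 : C3 = - (-1 * C3) by ring.
have -> : C3 = KK * S by rewrite e1 h1 h0; ring.
by field.
Qed.
End Sums.
Section Final.
Local Open Scope ring_scope.

Definition fm (k n : nat) : R :=
  Rdiv (pow (sin (Rdiv (Rmult PI (INR n)) (INR k))) 2)
       (pow (sin (Rdiv (Rmult (Rmult (IZR 2) PI) (INR n)) (INR k))) 4).

Lemma fm_term K n : (0 < n)%N -> (n.*2 < K)%N ->
  fm K n = (TT K n ^+ 2 + 3 * TT K n + 3 + (TT K n)^-1) / 16.
Proof.
move=> n0 nK; have [h1 h2] := xx_bounds _ _ n0 nK.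
have hpi : PI / 2 < PI by have := PIgt0; lra.
have hs := sinP h1 (lt_trans h2 hpi).
have hc := cosP h1 h2.
have e2 : Rdiv (Rmult (Rmult (IZR 2) PI) (INR n)) (INR K) = Rmult (IZR 2) (xx K n).
  by rewrite /xx /Rdiv !Rmult_assoc.
rewrite /fm e2 sin_2a -/(xx K n) !RpowE !RmultE RdivE R2 /TT.
set s := sin (xx K n) in hs *. set c := cos (xx K n) in hc *.
have E : s ^+ 2 + c ^+ 2 = 1.
  by have := sin2_cos2 (xx K n); rewrite /Rsqr RplusE !RmultE -!expr2.
have s0 : s != 0 by rewrite gt_eqF. have c0 : c != 0 by rewrite gt_eqF.
have -> : s ^+ 2 = s ^+ 2 * (s ^+ 2 + c ^+ 2) ^+ 3 by rewrite E expr1n mulr1.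
field.
by rewrite s0 c0.
Qed.

Lemma fm_sym K n : (n <= K)%N -> (0 < K)%N -> fm K (K - n) = fm K n.
Proof.
move=> nK K0.
rewrite /fm minus_INR; last by lia.
have K0' : (K%:R : R) != 0 by rewrite pnatr_eq0 -lt0n.
have a1 : Rdiv (Rmult PI (Rminus (INR K) (INR n))) (INR K) =
          Rminus PI (Rdiv (Rmult PI (INR n)) (INR K)).
  rewrite !RdivE !RmultE !RminusE !INRE. field. done.
have a2 : Rdiv (Rmult (Rmult (IZR 2) PI) (Rminus (INR K) (INR n))) (INR K) =
          Rminus (Rmult (IZR 2) PI) (Rdiv (Rmult (Rmult (IZR 2) PI) (INR n)) (INR K)).
  rewrite !RdivE !RmultE !RminusE !INRE. field. done.
rewrite a1 a2 sin_PI_x sin_minus sin_2PI cos_2PI !RpowE.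
congr (Rdiv _ _).
rewrite RminusE !RmultE mul0r mul1r sub0r.
by rewrite -mulN1r exprMn -signr_odd /= expr0 mul1r.
Qed.

Lemma sumR0_big (g : nat -> R) N : sum_f_R0 g N = \sum_(i < N.+1) g i.
Proof.
elim: N => [|N IH]; first by rewrite big_ord1.
by rewrite big_ord_recr /= IH.
Qed.

Lemma half_sum (g : nat -> R) m :
  (forall i, (i < m)%N -> g (m.*2 - i.+1)%N = g i) ->
  \sum_(i < m.*2) g i = 2 * \sum_(i < m) g i.
Proof.
move=> hs.
rewrite -!(big_mkord xpredT) (big_cat_nat _ (n := m)) //=; last by rewrite -addnn leq_addr.
rewrite [X in _ + X]big_rev_mkord (_ : m.*2 - m = m)%N; last by rewrite -addnn addnK.
rewrite [X in _ + X](eq_bigr (fun i : 'I_m => g i)); last by move=> i _; apply: hs.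
by rewrite big_mkord mulr_natl mulr2n.
Qed.
End Final.
Section Final2.
Local Open Scope ring_scope.

Lemma bin2E p : ('C(p.*2.+3, p.*2.+1) * 2 = (p.*2.+3) * (p.*2.+2))%N.
Proof.
have -> : (p.*2.+1 = p.*2.+3 - 2)%N by lia.
rewrite bin_sub //.
have := bin_ffact (p.*2.+3) 2; rewrite !ffactnS ffactn0 /= => ->.
by rewrite muln1.
Qed.

Lemma bin3E p : ('C(p.*2.+3, 3) * 6 = (p.*2.+3) * (p.*2.+2) * (p.*2.+1))%N.
Proof.
have := bin_ffact (p.*2.+3) 3; rewrite !ffactnS ffactn0 /= => ->.
by rewrite muln1 !mulnA.
Qed.

Lemma bin4E p : ('C(p.*2.+3, 4) * 24 = (p.*2.+3) * (p.*2.+2) * (p.*2.+1) * p.*2)%N.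
Proof.
have := bin_ffact (p.*2.+3) 4; rewrite !ffactnS ffactn0 /= => ->.
by rewrite muln1 !mulnA.
Qed.

Lemma natd p j : ((p.*2 + j)%N%:R : R) = 2 * p%:R + j%:R.
Proof. by rewrite natrD -muln2 natrM mulrC. Qed.

Lemma sum_rs p (F : R -> R) :
  \sum_(r <- [seq TT p.*2.+3 i.+1 | i <- iota 0 p.+1]) F r = \sum_(i < p.+1) F (TT p.*2.+3 i.+1).
Proof. by rewrite big_map -(big_mkord xpredT (fun i => F (TT p.*2.+3 i.+1))). Qed.

Lemma main_p p :
  \sum_(i < p.*2.+2) fm p.*2.+3 i.+1 =
  (((p.*2.+3)%:R) ^+ 4 + 6 * ((p.*2.+3)%:R) ^+ 2 - 7) / 48 :> R.
Proof.
rewrite -doubleS (half_sum (fun i => fm p.*2.+3 i.+1)); last first.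
  move=> i hi /=.
  have -> : ((p.+1).*2 - i.+1).+1 = (p.*2.+3 - i.+1)%N by lia.
  by apply: fm_sym; lia.
rewrite (eq_bigr (fun i : 'I_p.+1 => let T := TT p.*2.+3 i.+1 in (T ^+ 2 + 3 * T + 3 + T^-1) / 16)); last first.
  by move=> i _; have hi := ltn_ord i; apply: fm_term; lia.
rewrite /= -mulr_suml !big_split /= -mulr_sumr sumr_const card_ord.
rewrite -(sum_rs p (fun r => r ^+ 2)) -(sum_rs p id) -(sum_rs p (fun r => r^-1)) /=.
rewrite S2E SinvE S1E.
have c2 := congr1 (fun x => x%:R : R) (bin2E p).
have c3 := congr1 (fun x => x%:R : R) (bin3E p).
have c4 := congr1 (fun x => x%:R : R) (bin4E p).
rewrite !natrM in c2 c3 c4.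
move: c2 c3 c4.
rewrite -[p.*2.+3]addn3 -[p.*2.+2]addn2 -[p.*2.+1]addn1 !natd.
rewrite -[p.*2]addn0 natd /= addn0.
set P := p%:R : R.
have eP1 : (p.+1%:R : R) = P + 1 by rewrite -natr1.
rewrite ?eP1.
set C2 := ('C(p.*2 + 3, p.*2 + 1))%:R : R.
set C3 := ('C(p.*2 + 3, 3))%:R : R.
set C4 := ('C(p.*2 + 3, 4))%:R : R.
move=> c2 c3 c4.
have e2 : C2 = (C2 * 2) / 2 by field.
have e3 : C3 = (C3 * 6) / 6 by field.
have e4 : C4 = (C4 * 24) / 24 by field.
rewrite c2 in e2. rewrite c3 in e3. rewrite c4 in e4.
rewrite e2 e3 e4.
have hP : 0 <= P by rewrite /P ler0n.
field.
lra.
Qed.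
End Final2.
Lemma IZRnat (q : positive) : IZR (Z.pos q) = ((Pos.to_nat q)%:R : R)%R.
Proof. by rewrite IZRposE INRE Pos_to_natE. Qed.

Open Scope R_scope.

Theorem mainTheorem3 (k : nat) (hk : Nat.Odd k) :
  (if (k <=? 1)%nat then 0
   else sum_f 1 (k - 1)%coq_nat
          (fun n => (sin (PI * INR n / INR k)) ^ 2 / (sin (2 * PI * INR n / INR k)) ^ 4))
  = / 48 * ((INR k) ^ 4 + 6 * (INR k) ^ 2 - 7).
Proof.
case: hk => m ->.
case: m => [|p].
  have -> : (2 * 0 + 1)%coq_nat = 1%N by [].
  have -> : (1 <=? 1)%nat = true by [].
  rewrite !RpowE RinvE RmultE RminusE RplusE !RmultE !IZRnat INRE R0E.
  rewrite (_ : Pos.to_nat 48 = 48%N); last by [].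
  rewrite (_ : Pos.to_nat 6 = 6%N); last by [].
  rewrite (_ : Pos.to_nat 7 = 7%N); last by [].
  by rewrite expr1n; field.
have -> : (2 * p.+1 + 1)%coq_nat = p.*2.+3 by lia.
have -> : (p.*2.+3 <=? 1)%nat = false by [].
rewrite /sum_f (_ : (p.*2.+3 - 1 - 1)%coq_nat = p.*2.+1); last by lia.
rewrite sumR0_big.
rewrite (eq_bigr (fun i : 'I_ _ => fm p.*2.+3 i.+1)); last first.
  move=> i _; rewrite /fm (_ : (i + 1)%coq_nat = i.+1) //; lia.
rewrite main_p.
rewrite !RpowE RinvE RmultE RminusE RplusE !RmultE !IZRnat INRE.
rewrite (_ : Pos.to_nat 48 = 48%N); last by [].
rewrite (_ : Pos.to_nat 6 = 6%N); last by [].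
rewrite (_ : Pos.to_nat 7 = 7%N); last by [].
by field.
Qed.
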